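(* Let $\Sigma$ be a nominal $\mathrm{Perm}$-set and $O$ a nominal $\mathrm{Sb}$-set, and let $S(X)=UO\times(\Sigma\mathbin{-\!\!*}X)$ and $B(X)=O\times(F\Sigma\Rightarrow_{\mathrm{Sb}}X)$. Suppose $((F\Sigma)^*\Rightarrow_{\mathrm{Sb}}O,\zeta)$ is a final $B$-coalgebra. Then $\big(U((F\Sigma)^*\Rightarrow_{\mathrm{Sb}}O),\ \lambda^{-1}\circ U(\zeta)\big)$ is a final $S$-coalgebra; in particular its carrier is the set $(F\Sigma)^*\Rightarrow_{\mathrm{Sb}}O$.
   Context: Atoms $\mathbb{A}$ (countably infinite); $\mathrm{Sb}$ = monoid of functions $\mathbb{A}\to\mathbb{A}$ that are the identity outside a finite set; $\mathrm{Perm}$ its bijections. Nominal $M$-sets ($M\in\{\mathrm{Sb},\mathrm{Perm}\}$): $M$-sets whose elements $x$ have finite supports $C$ ($m_1|_C=m_2|_C\Rightarrow m_1x=m_2x$); $\mathrm{supp}(x)$ is the least. $U$ restricts $\mathrm{Sb}$-actions to $\mathrm{Perm}$. $F(X)=(\mathrm{Sb}\times X)/{\sim}$, $\sim$ least equivalence with $(m,gx)\sim(mg,x)$ ($g\in\mathrm{Perm}$) and $(m,x)\sim(m',x)$ if $m|_C=m'|_C$ for a support $C$ of $x$; action $n[m,x]=[nm,x]$; $F\dashv U$ with counit $\epsilon[m,y]=m y$. $x\perp y$: disjoint supports; $A\otimes B=\{(a,b)\mid a\perp b\}$. $A\mathbin{-\!\!*}X$: nominal $\mathrm{Perm}$-set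 of partial functions $f\colon A\rightharpoonup X$, finitely supported for $(g f)(a)=g f(g^{-1}a)$, defined exactly on $\{a\mid f\perp a\}$, with $\mathrm{supp}(f)=\bigcup_{a\in\mathrm{dom}f}\mathrm{supp}(f(a))\setminus\mathrm{supp}(a)$; evaluation $\mathrm{ev}(f,a)=f(a)$. $A\Rightarrow_{\mathrm{Sb}}X$: the exponential in nominal $\mathrm{Sb}$-sets, i.e. finitely supported $\mathrm{Sb}$-equivariant $f\colon\mathrm{Sb}\times A\to X$ with $(m f)(n,a)=f(nm,a)$. $(F\Sigma)^*$: words over $F\Sigma$ with pointwise action. The isomorphism $p\colon F(A\otimes B)\to F(A)\times F(B)$, $p[m,(a,b)]=([m,a],[m,b])$. For a nominal $\mathrm{Sb}$-set $Z$, $\phi\colon(\Sigma\mathbin{-\!\!*}UZ)\to U(F\Sigma\Rightarrow_{\mathrm{Sb}}Z)$ is the isomorphism $\phi(\psi)(s,\xi)=\epsilon(F(\mathrm{ev})(p^{-1}([s,\psi],\xi)))$, and $\lambda_Z\colon UO\times(\Sigma\mathbin{-\!\!*}UZ)\to U(O\times(F\Sigma\Rightarrow_{\mathrm{Sb}}Z))$ is $\lambda_Z(o,\psi)=(o,\phi(\psi))$. An $H$-coalgebra is a pair $(X,\gamma\colon X\to HX)$; final means terminal in the category of $H$-coalgebras. *)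

(* Defs.v *)
From Stdlib Require Import List ClassicalEpsilon FunctionalExtensionality ProofIrrelevance.
Import ListNotations.


Definition atom := nat.

Record Sb := mkSb {
  sbf :> atom -> atom;
  sb_fin : exists l : list atom, forall a, ~ In a l -> sbf a = a }.

Lemma sb_id_fin : exists l : list atom, forall a : atom, ~ In a l -> a = a.
Proof. exists nil; auto. Qed.
Definition sb_id : Sb := mkSb (fun a => a) sb_id_fin.

Lemma sb_comp_fin (m n : Sb) :
  exists l : list atom, forall a, ~ In a l -> m (n a) = a.
Proof.
  destruct (sb_fin m) as [lm Hm]; destruct (sb_fin n) as [ln Hn].
  exists (lm ++ ln); intros a Ha.
  rewrite Hn; [rewrite Hm|]; auto; intro; apply Ha; apply in_or_app; auto.
Qed.
Definition sb_comp (m n : Sb) : Sb := mkSb (fun a => m (n a)) (sb_comp_fin m n).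

Record Perm := mkPerm {
  pfun :> Sb;
  pinv : Sb;
  pinvK : forall a, pinv (pfun a) = a;
  pfunK : forall a, pfun (pinv a) = a }.

Definition perm_id : Perm :=
  mkPerm sb_id sb_id (fun a => eq_refl) (fun a => eq_refl).

Lemma perm_comp_K (g h : Perm) a : sb_comp (pinv h) (pinv g) (sb_comp g h a) = a.
Proof. simpl. rewrite pinvK, pinvK. reflexivity. Qed.
Lemma perm_comp_KV (g h : Perm) a : sb_comp g h (sb_comp (pinv h) (pinv g) a) = a.
Proof. simpl. rewrite pfunK, pfunK. reflexivity. Qed.
Definition perm_comp (g h : Perm) : Perm :=
  mkPerm (sb_comp g h) (sb_comp (pinv h) (pinv g)) (perm_comp_K g h) (perm_comp_KV g h).

Definition perm_inv (g : Perm) : Perm := mkPerm (pinv g) (pfun g) (pfunK g) (pinvK g).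

Definition agree (f g : atom -> atom) (C : list atom) : Prop :=
  forall a, In a C -> f a = g a.

Definition supportsS {X : Type} (act : Sb -> X -> X) (C : list atom) (x : X) : Prop :=
  forall m1 m2 : Sb, agree m1 m2 C -> act m1 x = act m2 x.
Definition supportsP {X : Type} (act : Perm -> X -> X) (C : list atom) (x : X) : Prop :=
  forall g1 g2 : Perm, agree g1 g2 C -> act g1 x = act g2 x.

(* the least support (w.r.t. the Perm-action), as the intersection of all
   finite supports *)
Definition suppP {X : Type} (act : Perm -> X -> X) (x : X) (a : atom) : Prop :=
  forall C, supportsP act C x -> In a C.

Definition disjP {X Y : Type} (actX : Perm -> X -> X) (actY : Perm -> Y -> Y)
  (x : X) (y : Y) : Prop :=
  forall a, suppP actX x a -> suppP actY y a -> False.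

Definition nominalS {X : Type} (act : Sb -> X -> X) : Prop :=
  (forall x, act sb_id x = x) /\
  (forall m n x, act (sb_comp m n) x = act m (act n x)) /\
  (forall x, exists C, supportsS act C x).
Definition nominalP {X : Type} (act : Perm -> X -> X) : Prop :=
  (forall x, act perm_id x = x) /\
  (forall g h x, act (perm_comp g h) x = act g (act h x)) /\
  (forall x, exists C, supportsP act C x).

Record NomSb := { sCar :> Type; sAct : Sb -> sCar -> sCar; sNom : nominalS sAct }.
Record NomPerm := { pCar :> Type; pAct : Perm -> pCar -> pCar; pNom : nominalP pAct }.

Definition Uact {X : Type} (act : Sb -> X -> X) : Perm -> X -> X :=
  fun g x => act (pfun g) x.

Definition sepact {A X : Type} (actA : Perm -> A -> A) (actX : Perm -> X -> X)
  (g : Perm) (f : A -> option X) : A -> option X :=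
  fun a => option_map (actX g) (f (actA (perm_inv g) a)).

Definition SepFun (A X : Type) (actA : Perm -> A -> A) (actX : Perm -> X -> X) :=
  { f : A -> option X |
      (exists C, supportsP (sepact actA actX) C f) /\
      (forall a, f a <> None <-> disjP (sepact actA actX) actA f a) }.

Inductive Frel {A : Type} (actA : Perm -> A -> A) : Sb * A -> Sb * A -> Prop :=
  | Frel_perm (m : Sb) (g : Perm) (x : A) :
      Frel actA (m, actA g x) (sb_comp m g, x)
  | Frel_supp (m m' : Sb) (x : A) (C : list atom) :
      supportsP actA C x -> agree m m' C -> Frel actA (m, x) (m', x)
  | Frel_refl p : Frel actA p p
  | Frel_sym p q : Frel actA p q -> Frel actA q p
  | Frel_trans p q r : Frel actA p q -> Frel actA q r -> Frel actA p r.

(* F(A) = (Sb x A)/~ , as the type of equivalence classes *)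
Definition FT (A : Type) (actA : Perm -> A -> A) : Type :=
  { P : Sb * A -> Prop | exists p, P = Frel actA p }.

Definition Fclass {A : Type} (actA : Perm -> A -> A) (p : Sb * A) : FT A actA :=
  exist _ (Frel actA p) (ex_intro _ p eq_refl).

Definition Frep {A : Type} {actA : Perm -> A -> A} (xi : FT A actA) : Sb * A :=
  proj1_sig (constructive_indefinite_description _ (proj2_sig xi)).

Definition Fact {A : Type} (actA : Perm -> A -> A) (n : Sb) (xi : FT A actA) : FT A actA :=
  Fclass actA (sb_comp n (fst (Frep xi)), snd (Frep xi)).

Definition wact {X : Type} (act : Sb -> X -> X) (n : Sb) (w : list X) : list X :=
  map (act n) w.

Definition expact {A X : Type} (m : Sb) (f : Sb -> A -> X) : Sb -> A -> X :=
  fun n a => f (sb_comp n m) a.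

Definition Exp (A X : Type) (actA : Sb -> A -> A) (actX : Sb -> X -> X) :=
  { f : Sb -> A -> X |
      (forall k n a, f (sb_comp k n) (actA k a) = actX k (f n a)) /\
      (exists C, supportsS expact C f) }.

Section Coalg.
Variables (Sig : NomPerm) (O : NomSb).

Definition FSig := FT (pCar Sig) (pAct Sig).
Definition FSigAct : Sb -> FSig -> FSig := Fact (pAct Sig).

Definition Bobj {Z : Type} (actZ : Sb -> Z -> Z) : Type :=
  sCar O * Exp FSig Z FSigAct actZ.

Definition B_equiv {Z : Type} {actZ : Sb -> Z -> Z} (zeta : Z -> Bobj actZ) : Prop :=
  forall m z, fst (zeta (actZ m z)) = sAct O m (fst (zeta z)) /\
              proj1_sig (snd (zeta (actZ m z))) = expact m (proj1_sig (snd (zeta z))).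

Definition B_hom {Y : NomSb} (delta : sCar Y -> Bobj (sAct Y))
  {Z : Type} {actZ : Sb -> Z -> Z} (zeta : Z -> Bobj actZ) (h : sCar Y -> Z) : Prop :=
  (forall m y, h (sAct Y m y) = actZ m (h y)) /\
  (forall y, fst (zeta (h y)) = fst (delta y) /\
     forall n xi, proj1_sig (snd (zeta (h y))) n xi = h (proj1_sig (snd (delta y)) n xi)).

Definition final_B {Z : Type} {actZ : Sb -> Z -> Z} (zeta : Z -> Bobj actZ) : Prop :=
  nominalS actZ /\ B_equiv zeta /\
  forall (Y : NomSb) (delta : sCar Y -> Bobj (sAct Y)), B_equiv delta ->
    exists h : sCar Y -> Z, B_hom delta zeta h /\
      forall h' : sCar Y -> Z, B_hom delta zeta h' -> forall y, h' y = h y.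

Definition Sobj {X : Type} (actX : Perm -> X -> X) : Type :=
  sCar O * SepFun (pCar Sig) X (pAct Sig) actX.

Definition S_equiv {X : Type} {actX : Perm -> X -> X} (gam : X -> Sobj actX) : Prop :=
  forall g x, fst (gam (actX g x)) = Uact (sAct O) g (fst (gam x)) /\
    proj1_sig (snd (gam (actX g x))) = sepact (pAct Sig) actX g (proj1_sig (snd (gam x))).

(* h is an S-coalgebra morphism: h equivariant and gam o h = S(h) o delta,
   where S(h)(o, psi) = (o, S(h) psi) and S(h) psi is the (unique) element of
   Sigma -* X extending the partial function h o psi *)
Definition S_hom {Y : NomPerm} (delta : pCar Y -> Sobj (pAct Y))
  {X : Type} {actX : Perm -> X -> X} (gam : X -> Sobj actX) (h : pCar Y -> X) : Prop :=
  (forall g y, h (pAct Y g y) = actX g (h y)) /\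
  (forall y, fst (gam (h y)) = fst (delta y) /\
     forall a x, proj1_sig (snd (delta y)) a = Some x ->
                 proj1_sig (snd (gam (h y))) a = Some (h x)).

Definition final_S {X : Type} {actX : Perm -> X -> X} (gam : X -> Sobj actX) : Prop :=
  nominalP actX /\ S_equiv gam /\
  forall (Y : NomPerm) (delta : pCar Y -> Sobj (pAct Y)), S_equiv delta ->
    exists h : pCar Y -> X, S_hom delta gam h /\
      forall h' : pCar Y -> X, S_hom delta gam h' -> forall y, h' y = h y.

(* phi(psi)(s, xi) = z  iff  z = eps(F(ev)(p^{-1}([s,psi], xi))), i.e. there are
   m', psi' in Sigma -* UZ and a' in Sigma with psi' # a' (equivalently
   psi' a' defined), [m',psi'] = [s,psi] in F(Sigma -* UZ), [m',a'] = xi in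
   F Sigma, and z = m' . psi'(a'). *)
Definition phi_rel {Z : Type} {actZ : Sb -> Z -> Z}
  (psi : SepFun (pCar Sig) Z (pAct Sig) (Uact actZ)) (s : Sb) (xi : FSig) (z : Z) : Prop :=
  exists (m' : Sb) (psi' : SepFun (pCar Sig) Z (pAct Sig) (Uact actZ)) (a' : pCar Sig) (x : Z),
    proj1_sig psi' a' = Some x /\
    Frel (sepact (pAct Sig) (Uact actZ)) (m', proj1_sig psi') (s, proj1_sig psi) /\
    Fclass (pAct Sig) (m', a') = xi /\
    z = actZ m' x.

End Coalg.

Definition Carrier (Sig : NomPerm) (O : NomSb) : Type :=
  Exp (list (FSig Sig)) (sCar O) (wact (FSigAct Sig)) (sAct O).
Lemma sb_eq (m n : Sb) : (forall a, m a = n a) -> m = n.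
Proof.
  destruct m as [f Hf], n as [g Hg]; simpl; intro H.
  assert (f = g) by (apply functional_extensionality; exact H).
  subst g. f_equal. apply proof_irrelevance.
Qed.
Lemma sb_comp_assoc (k n m : Sb) : sb_comp (sb_comp k n) m = sb_comp k (sb_comp n m).
Proof. apply sb_eq; reflexivity. Qed.

Definition CarrierAct (Sig : NomPerm) (O : NomSb) (m : Sb) (e : Carrier Sig O)
  : Carrier Sig O.
Proof.
  refine (exist _ (expact m (proj1_sig e)) _).
  destruct (proj2_sig e) as [Heq [C HC]]; split.
  - intros k n a. unfold expact. rewrite sb_comp_assoc. apply Heq.
  - exists (map m C). intros m1 m2 Hag. unfold expact.
    apply functional_extensionality; intro n.
    apply functional_extensionality; intro a.
    rewrite !sb_comp_assoc.
    assert (E : expact (sb_comp m1 m) (proj1_sig e) = expact (sb_comp m2 m) (proj1_sig e)).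
    { apply HC. intros c Hc. simpl. apply Hag. apply in_map; exact Hc. }
    exact (f_equal (fun f => f n a) E).
Defined.

(* Main.v *)
Require Import Defs.
From Stdlib Require Import List Arith Lia ClassicalEpsilon FunctionalExtensionality ProofIrrelevance Classical PropExtensionality.
Import ListNotations.
Open Scope bool_scope.
Open Scope bool_scope.

Definition tr (x y a : atom) : atom :=
  if Nat.eqb a x then y else if Nat.eqb a y then x else a.

Lemma tr_invol x y a : tr x y (tr x y a) = a.
Proof.
  unfold tr. destruct (Nat.eqb_spec a x); subst.
  - destruct (Nat.eqb_spec y x); subst; auto. rewrite Nat.eqb_refl. auto.
  - destruct (Nat.eqb_spec a y); subst.
    + rewrite Nat.eqb_refl. auto.
    + rewrite (proj2 (Nat.eqb_neq a x)) by auto. rewrite (proj2 (Nat.eqb_neq a y)) by auto. auto.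
Qed.

Fixpoint swapf (ps : list (atom * atom)) (a : atom) : atom :=
  match ps with
  | [] => a
  | (x, y) :: ps' => tr x y (swapf ps' a)
  end.

Fixpoint flatp (ps : list (atom * atom)) : list atom :=
  match ps with [] => [] | (x, y) :: ps' => x :: y :: flatp ps' end.

Lemma swapf_app ps1 ps2 a : swapf (ps1 ++ ps2) a = swapf ps1 (swapf ps2 a).
Proof. induction ps1 as [|[x y] ps IH]; simpl; try rewrite IH; auto. Qed.

Lemma swapf_rev ps a : swapf (rev ps) (swapf ps a) = a.
Proof.
  induction ps as [|[x y] ps IH]; simpl; auto.
  rewrite swapf_app. simpl. rewrite tr_invol. auto.
Qed.

Lemma swapf_rev' ps a : swapf ps (swapf (rev ps) a) = a.
Proof.
  pose proof (swapf_rev (rev ps) a) as H. rewrite rev_involutive in H. exact H.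
Qed.

Lemma swapf_out ps a : ~ In a (flatp ps) -> swapf ps a = a.
Proof.
  induction ps as [|[x y] ps IH]; simpl; auto. intro H.
  rewrite IH by tauto. unfold tr.
  destruct (Nat.eqb_spec a x); [subst; exfalso; tauto|].
  destruct (Nat.eqb_spec a y); [subst; exfalso; tauto|]. auto.
Qed.

Lemma swapf_fin ps : exists l : list atom, forall a, ~ In a l -> swapf ps a = a.
Proof. exists (flatp ps). apply swapf_out. Qed.

Definition swapsb (ps : list (atom * atom)) : Sb := mkSb (swapf ps) (swapf_fin ps).

Definition swapperm (ps : list (atom * atom)) : Perm :=
  mkPerm (swapsb ps) (swapsb (rev ps)) (swapf_rev ps) (swapf_rev' ps).

Lemma flatp_map_in (D : list atom) (f g : atom -> atom) a :
  In a (flatp (map (fun d => (f d, g d)) D)) -> exists d, In d D /\ (a = f d \/ a = g d).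
Proof.
  induction D as [|d D IH]; simpl; [tauto|].
  intros [H|[H|H]]; eauto. destruct (IH H) as [d' [? ?]]; eauto.
Qed.

Lemma swap_shift (D : list atom) (M : nat) :
  NoDup D -> (forall d, In d D -> d < M) ->
  forall d, In d D -> swapf (map (fun d => (d, d + M)) D) d = d + M.
Proof.
  induction D as [|d0 D IH]; simpl; [tauto|]. intros ND HM d Hd.
  inversion ND; subst.
  destruct Hd as [<-|Hd].
  - rewrite swapf_out. unfold tr. rewrite Nat.eqb_refl. auto.
    intro H. destruct (flatp_map_in _ _ _ _ H) as [d' [Hd' [E|E]]].
    + subst; auto.
    + assert (d0 < M) by auto. lia.
  - rewrite IH by auto. unfold tr.
    assert (d0 < M) by auto. assert (d <> d0) by (intro; subst; auto).
    destruct (Nat.eqb_spec (d + M) d0); [lia|].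
    destruct (Nat.eqb_spec (d + M) (d0 + M)); [lia|]. auto.
Qed.

Lemma swap_shift2 (D : list atom) (M : nat) (g : atom -> atom) :
  NoDup D -> (forall d, In d D -> g d < M) ->
  (forall a b, In a D -> In b D -> g a = g b -> a = b) ->
  forall d, In d D -> swapf (map (fun d => (d + M, g d)) D) (d + M) = g d.
Proof.
  induction D as [|d0 D IH]; simpl; [tauto|]. intros ND HM Hinj d Hd.
  inversion ND; subst.
  destruct Hd as [<-|Hd].
  - rewrite swapf_out. unfold tr. rewrite Nat.eqb_refl. auto.
    intro H. destruct (flatp_map_in _ _ _ _ H) as [d' [Hd' [E|E]]].
    + assert (d' = d0) by lia. subst; auto.
    + assert (g d' < M) by auto. lia.
  - rewrite IH by auto. unfold tr.
    assert (g d < M) by auto.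
    destruct (Nat.eqb_spec (g d) (d0 + M)); [lia|].
    destruct (Nat.eqb_spec (g d) (g d0)).
    + exfalso. assert (d = d0) by auto. subst; auto.
    + auto.
Qed.

Definition lmax (l : list atom) : nat := fold_right Nat.max 0 l.
Lemma lmax_ge l a : In a l -> a <= lmax l.
Proof. induction l; simpl; [tauto|]. intros [->|H]; [lia|]. specialize (IHl H). lia. Qed.

Lemma perm_ext (D : list atom) (f : atom -> atom) :
  (forall a b, In a D -> In b D -> f a = f b -> a = b) ->
  exists p : Perm, forall d, In d D -> p d = f d.
Proof.
  intros Hinj.
  set (D' := nodup Nat.eq_dec D).
  set (M := S (lmax (D ++ map f D))).
  assert (HD : forall d, In d D' <-> In d D) by (intro; apply nodup_In).
  assert (ND : NoDup D') by apply NoDup_nodup.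
  assert (HM1 : forall d, In d D' -> d < M).
  { intros d Hd. apply HD in Hd. unfold M. pose proof (lmax_ge (D ++ map f D) d).
    assert (In d (D ++ map f D)) by (apply in_or_app; auto). intuition lia. }
  assert (HM2 : forall d, In d D' -> f d < M).
  { intros d Hd. apply HD in Hd. unfold M. pose proof (lmax_ge (D ++ map f D) (f d)).
    assert (In (f d) (D ++ map f D)) by (apply in_or_app; right; apply in_map; auto). intuition lia. }
  exists (swapperm (map (fun d => (d + M, f d)) D' ++ map (fun d => (d, d + M)) D')).
  intros d Hd. apply HD in Hd. simpl. rewrite swapf_app.
  rewrite swap_shift by auto. apply swap_shift2; auto.
  intros a b Ha Hb. apply Hinj; apply HD; auto.
Qed.

Definition inb (c : atom) (l : list atom) : bool := if in_dec Nat.eq_dec c l then true else false.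
Lemma inb_iff c l : inb c l = true <-> In c l.
Proof. unfold inb. destruct (in_dec Nat.eq_dec c l); split; auto; discriminate. Qed.
Lemma inb_false c l : inb c l = false <-> ~ In c l.
Proof. unfold inb. destruct (in_dec Nat.eq_dec c l); split; auto; try discriminate; tauto. Qed.

Lemma lt_lmax l a : In a l -> a < S (lmax l).
Proof. intro H. apply lmax_ge in H. lia. Qed.

Lemma inj_shift (D : list atom) (P : atom -> bool) (g : Perm) (M : nat) :
  (forall d, In d D -> P d = true -> g d < M) ->
  forall a b, In a D -> In b D ->
    (if P a then g a else a + M) = (if P b then g b else b + M) -> a = b.
Proof.
  intros HM a b Ha Hb.
  destruct (P a) eqn:Pa, (P b) eqn:Pb; intro E.
  - rewrite <- (pinvK g a), <- (pinvK g b). rewrite E. auto.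
  - specialize (HM a Ha Pa). lia.
  - specialize (HM b Hb Pb). lia.
  - lia.
Qed.

Lemma pfun_pinv (g : Perm) a : g (pinv g a) = a.
Proof. apply pfunK. Qed.

Definition pact_ok {X : Type} (act : Perm -> X -> X) : Prop :=
  (forall x, act perm_id x = x) /\
  (forall g h x, act (perm_comp g h) x = act g (act h x)) /\
  (forall (g1 g2 : Perm) x, (forall a, g1 a = g2 a) -> act g1 x = act g2 x).

Lemma nominalP_ok {X} (act : Perm -> X -> X) : nominalP act -> pact_ok act.
Proof.
  intros [H1 [H2 H3]]. split; [auto|split; [auto|]].
  intros g1 g2 x E. destruct (H3 x) as [C HC]. apply HC. intros a _; auto.
Qed.

Lemma act_inv_l {X} (act : Perm -> X -> X) : pact_ok act ->
  forall g x, act (perm_inv g) (act g x) = x.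
Proof.
  intros [H1 [H2 H3]] g x. rewrite <- H2. rewrite <- (H1 x) at 2. apply H3.
  intro a. simpl. apply pinvK.
Qed.

Lemma act_inv_r {X} (act : Perm -> X -> X) : pact_ok act ->
  forall g x, act g (act (perm_inv g) x) = x.
Proof.
  intros [H1 [H2 H3]] g x. rewrite <- H2. rewrite <- (H1 x) at 2. apply H3.
  intro a. simpl. apply pfunK.
Qed.

Lemma supp_mono {X} (act : Perm -> X -> X) C C' x :
  supportsP act C x -> (forall a, In a C -> In a C') -> supportsP act C' x.
Proof. intros H Hi g1 g2 Ha. apply H. intros a Ina. apply Ha. auto. Qed.

Lemma supp_map {X} (act : Perm -> X -> X) : pact_ok act ->
  forall C x (g : Perm), supportsP act C x -> supportsP act (map g C) (act g x).
Proof.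
  intros [H1 [H2 H3]] C x g HC h1 h2 Hag.
  rewrite <- !H2. apply HC. intros a Ha. simpl. apply Hag. apply in_map. auto.
Qed.

Lemma suppP_act {X} (act : Perm -> X -> X) : pact_ok act ->
  forall g x c, suppP act (act g x) c <-> suppP act x (pinv g c).
Proof.
  intros Hok g x c. split.
  - intros H C HC. pose proof (supp_map act Hok C x g HC) as H'.
    apply H in H'. apply in_map_iff in H'. destruct H' as [d [E Hd]].
    subst. rewrite pinvK. auto.
  - intros H C HC. pose proof (supp_map act Hok C _ (perm_inv g) HC) as H'.
    rewrite act_inv_l in H' by auto. apply H in H'.
    apply in_map_iff in H'. destruct H' as [d [E Hd]]. simpl in E.
    assert (d = c) as <- by (rewrite <- (pfunK g d), <- (pfunK g c); f_equal; exact E). auto.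
Qed.

Lemma supp_inter {X} (act : Perm -> X -> X) : pact_ok act ->
  forall C1 C2 x, supportsP act C1 x -> supportsP act C2 x ->
  supportsP act (filter (fun c => inb c C2) C1) x.
Proof.
  intros Hok C1 C2 x S1 S2 g1 g2 Hag.
  set (D := C1 ++ C2).
  set (M := S (lmax (D ++ map g1 D ++ map g2 D))).
  assert (HinD1 : forall c, In c D -> g1 c < M).
  { intros c Hc. apply lt_lmax. apply in_or_app; right; apply in_or_app; left; apply in_map; auto. }
  assert (HinD2 : forall c, In c D -> g2 c < M).
  { intros c Hc. apply lt_lmax. apply in_or_app; right; apply in_or_app; right; apply in_map; auto. }
  destruct (perm_ext D (fun c => if inb c C1 then g1 c else c + M)) as [u Hu].
  { apply inj_shift. intros; auto. }
  destruct (perm_ext D (fun c => if inb c C2 then g2 c else c + M)) as [v Hv].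
  { apply inj_shift. intros; auto. }
  destruct (perm_ext D (fun c => if inb c C1 && inb c C2 then g1 c else c + M)) as [w Hw].
  { apply inj_shift. intros; auto. }
  assert (DC1 : forall c, In c C1 -> In c D) by (intros; apply in_or_app; auto).
  assert (DC2 : forall c, In c C2 -> In c D) by (intros; apply in_or_app; auto).
  transitivity (act u x).
  { apply S1. intros c Hc. rewrite Hu by auto. apply inb_iff in Hc. rewrite Hc. auto. }
  transitivity (act w x).
  { apply S2. intros c Hc. rewrite Hu, Hw by auto.
    pose proof Hc as Hc'. apply inb_iff in Hc'. rewrite Hc'.
    destruct (inb c C1); simpl; auto. }
  transitivity (act v x).
  { apply S1. intros c Hc. rewrite Hv, Hw by auto.
    pose proof Hc as Hc'. apply inb_iff in Hc'. rewrite Hc'. simpl.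
    destruct (inb c C2) eqn:E; auto.
    apply Hag. apply filter_In. auto. }
  { apply eq_sym, S2. intros c Hc. rewrite Hv by auto. apply inb_iff in Hc. rewrite Hc. auto. }
Qed.

Lemma not_suppP {X} (act : Perm -> X -> X) x c :
  ~ suppP act x c -> exists C, supportsP act C x /\ ~ In c C.
Proof.
  intro H. unfold suppP in H. apply not_all_ex_not in H. destruct H as [C HC].
  exists C. tauto.
Qed.

Definition decP (P : Prop) : bool := if excluded_middle_informative P then true else false.
Lemma decP_iff P : decP P = true <-> P.
Proof. unfold decP. destruct (excluded_middle_informative P); split; auto; discriminate. Qed.

Lemma least_supp {X} (act : Perm -> X -> X) : pact_ok act ->
  forall x, (exists C, supportsP act C x) ->
  exists L, supportsP act L x /\ forall c, In c L <-> suppP act x c.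
Proof.
  intros Hok x [C HC].
  assert (K : forall K : list atom,
    supportsP act (filter (fun c => decP (suppP act x c) || negb (inb c K)) C) x).
  { induction K as [|k K IH].
    - eapply supp_mono; [exact HC|]. intros a Ha. apply filter_In. split; auto.
      simpl. destruct (decP _); auto.
    - destruct (classic (suppP act x k)) as [Hk|Hk].
      + eapply supp_mono; [exact IH|]. intros a Ha. apply filter_In in Ha. destruct Ha as [Ha Hb].
        apply filter_In. split; auto.
        apply Bool.orb_true_iff in Hb. apply Bool.orb_true_iff.
        destruct Hb as [Hb|Hb]; [auto|].
        destruct (Nat.eq_dec a k).
        * subst. left. apply decP_iff. auto.
        * right. apply Bool.negb_true_iff. apply inb_false. simpl.
          apply Bool.negb_true_iff, inb_false in Hb. intuition.
      + destruct (not_suppP act x k Hk) as [Ck [HCk nk]].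
        pose proof (supp_inter act Hok _ _ x IH HCk) as HI.
        eapply supp_mono; [exact HI|]. intros a Ha.
        apply filter_In in Ha. destruct Ha as [Ha Hak]. apply inb_iff in Hak.
        apply filter_In in Ha. destruct Ha as [Ha Hb].
        apply filter_In. split; auto.
        apply Bool.orb_true_iff in Hb. apply Bool.orb_true_iff.
        destruct Hb as [Hb|Hb]; [auto|]. right.
        apply Bool.negb_true_iff. apply inb_false. simpl.
        apply Bool.negb_true_iff, inb_false in Hb.
        intros [E|E]; [subst; auto|auto]. }
  exists (filter (fun c => decP (suppP act x c)) C). split.
  - eapply supp_mono; [exact (K C)|]. intros a Ha. apply filter_In in Ha. destruct Ha as [Ha Hb].
    apply filter_In. split; auto. apply Bool.orb_true_iff in Hb. destruct Hb as [Hb|Hb]; auto.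
    apply Bool.negb_true_iff, inb_false in Hb. tauto.
  - intros c. rewrite filter_In. rewrite decP_iff. split; [tauto|]. intro H. split; auto.
Qed.

Lemma sb_comp_id_l m : sb_comp sb_id m = m.
Proof. apply sb_eq; reflexivity. Qed.
Lemma sb_comp_id_r m : sb_comp m sb_id = m.
Proof. apply sb_eq; reflexivity. Qed.

Lemma perm_to_sb {X} (act : Sb -> X -> X) :
  (forall x, act sb_id x = x) -> (forall m n x, act (sb_comp m n) x = act m (act n x)) ->
  forall C C' x, supportsP (Uact act) C x -> supportsS act C' x -> supportsS act C x.
Proof.
  intros H1 H2 C C' x HC HC' m1 m2 Hag.
  destruct (sb_fin m1) as [l1 L1]. destruct (sb_fin m2) as [l2 L2].
  set (D := C ++ C'). set (M := S (lmax (D ++ l1 ++ l2))).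
  destruct (perm_ext D (fun c => if inb c C then perm_id c else c + M)) as [p Hp].
  { apply inj_shift. intros d Hd _. simpl. apply lt_lmax. apply in_or_app; auto. }
  assert (Ep : act p x = x).
  { change (Uact act p x = x). rewrite (HC p perm_id). unfold Uact. simpl. apply H1.
    intros a Ha. rewrite Hp by (apply in_or_app; auto). apply inb_iff in Ha. rewrite Ha. auto. }
  rewrite <- Ep. rewrite <- !H2. apply HC'. intros c Hc. simpl.
  rewrite Hp by (apply in_or_app; auto). destruct (inb c C) eqn:E.
  - apply inb_iff in E. simpl. apply Hag; auto.
  - assert (c + M >= M) by lia.
    rewrite L1, L2; auto.
    + intro I. assert (c + M < M); [|lia]. apply lt_lmax. apply in_or_app; right; apply in_or_app; auto.
    + intro I. assert (c + M < M); [|lia]. apply lt_lmax. apply in_or_app; right; apply in_or_app; auto.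
Qed.

Lemma Frel_lcomp {A} (actA : Perm -> A -> A) n p q :
  Frel actA p q -> Frel actA (sb_comp n (fst p), snd p) (sb_comp n (fst q), snd q).
Proof.
  induction 1; simpl.
  - rewrite <- sb_comp_assoc. apply Frel_perm.
  - apply Frel_supp with C; auto. intros a Ha. simpl. f_equal. apply H0; auto.
  - apply Frel_refl.
  - apply Frel_sym; auto.
  - eapply Frel_trans; eauto.
Qed.

Lemma FT_eq {A} (actA : Perm -> A -> A) (xi1 xi2 : FT A actA) :
  proj1_sig xi1 = proj1_sig xi2 -> xi1 = xi2.
Proof. destruct xi1, xi2; simpl; intros ->; f_equal; apply proof_irrelevance. Qed.

Lemma Fclass_eq {A} (actA : Perm -> A -> A) p q :
  Frel actA p q -> Fclass actA p = Fclass actA q.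
Proof.
  intro H. apply FT_eq. simpl. apply functional_extensionality. intro r.
  apply propositional_extensionality. split; intro H'.
  - eapply Frel_trans; [apply Frel_sym; exact H|exact H'].
  - eapply Frel_trans; [exact H|exact H'].
Qed.

Lemma Fclass_inv {A} (actA : Perm -> A -> A) p q :
  Fclass actA p = Fclass actA q -> Frel actA p q.
Proof.
  intro H. apply (f_equal (@proj1_sig _ _)) in H. simpl in H.
  rewrite H. apply Frel_refl.
Qed.

Lemma Frep_spec {A} (actA : Perm -> A -> A) (xi : FT A actA) : Fclass actA (Frep xi) = xi.
Proof.
  unfold Frep. destruct (constructive_indefinite_description _ _) as [p Hp]. simpl.
  apply FT_eq. simpl. auto.
Qed.

Lemma Fclass_surj {A} (actA : Perm -> A -> A) (xi : FT A actA) : exists p, xi = Fclass actA p.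
Proof. exists (Frep xi). symmetry. apply Frep_spec. Qed.

Lemma Fact_class {A} (actA : Perm -> A -> A) n p :
  Fact actA n (Fclass actA p) = Fclass actA (sb_comp n (fst p), snd p).
Proof.
  unfold Fact. apply Fclass_eq.
  apply (Frel_lcomp actA n (Frep (Fclass actA p)) p).
  apply Fclass_inv. apply Frep_spec.
Qed.

Lemma Fact_id {A} (actA : Perm -> A -> A) xi : Fact actA sb_id xi = xi.
Proof.
  destruct (Fclass_surj actA xi) as [[m y] ->]. rewrite Fact_class. simpl.
  rewrite sb_comp_id_l. auto.
Qed.

Lemma Fact_comp {A} (actA : Perm -> A -> A) m n xi :
  Fact actA (sb_comp m n) xi = Fact actA m (Fact actA n xi).
Proof.
  destruct (Fclass_surj actA xi) as [[k y] ->]. rewrite !Fact_class. simpl.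
  rewrite sb_comp_assoc. auto.
Qed.

Lemma F_nominal {A} (actA : Perm -> A -> A) : nominalP actA -> nominalS (Fact actA).
Proof.
  intros HA. split; [apply Fact_id|split; [apply Fact_comp|]].
  intro xi. destruct (Fclass_surj actA xi) as [[m y] ->].
  destruct HA as [_ [_ HS]]. destruct (HS y) as [C HC].
  exists (map m C). intros m1 m2 Hag. rewrite !Fact_class. simpl.
  apply Fclass_eq. apply Frel_supp with C; auto.
  intros a Ha. simpl. apply Hag. apply in_map; auto.
Qed.

Lemma ext_wd {A X} (actA : Perm -> A -> A) (act : Sb -> X -> X) (k : A -> X) :
  (forall x, act sb_id x = x) -> (forall m n x, act (sb_comp m n) x = act m (act n x)) ->
  (forall a, exists C, supportsS act C (k a)) ->
  (forall (g : Perm) a, k (actA g a) = act g (k a)) ->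
  forall p q, Frel actA p q -> act (fst p) (k (snd p)) = act (fst q) (k (snd q)).
Proof.
  intros H1 H2 Hs Heq p q HF. induction HF; simpl in *.
  - rewrite Heq, H2. auto.
  - destruct (Hs x) as [C' HC'].
    assert (supportsS act C (k x)) as HS.
    { apply (perm_to_sb act H1 H2 C C'); auto.
      intros g1 g2 Hg. unfold Uact. rewrite <- !Heq. f_equal. apply H; auto. }
    apply HS. auto.
  - auto.
  - auto.
  - congruence.
Qed.

Definition extF {A X} (actA : Perm -> A -> A) (act : Sb -> X -> X) (k : A -> X)
  (xi : FT A actA) : X := act (fst (Frep xi)) (k (snd (Frep xi))).

Lemma extF_class {A X} (actA : Perm -> A -> A) (act : Sb -> X -> X) (k : A -> X) :
  (forall x, act sb_id x = x) -> (forall m n x, act (sb_comp m n) x = act m (act n x)) ->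
  (forall a, exists C, supportsS act C (k a)) ->
  (forall (g : Perm) a, k (actA g a) = act g (k a)) ->
  forall p, extF actA act k (Fclass actA p) = act (fst p) (k (snd p)).
Proof.
  intros H1 H2 Hs Heq p. unfold extF. apply (ext_wd actA act k H1 H2 Hs Heq).
  apply Fclass_inv. apply Frep_spec.
Qed.

Lemma Frel_char {A} (actA : Perm -> A -> A) : pact_ok actA ->
  forall p q, Frel actA p q -> exists g : Perm, snd p = actA g (snd q) /\
    forall c, suppP actA (snd q) c -> fst p (g c) = fst q c.
Proof.
  intros Hok p q HF. pose proof Hok as [H1 [H2 H3]].
  induction HF; simpl in *.
  - exists g. split; auto.
  - exists perm_id. split; [rewrite H1; auto|]. intros c Hc. apply H0. apply Hc. auto.
  - exists perm_id. split; [rewrite H1; auto|]. auto.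
  - destruct IHHF as [g [Ea Hg]]. exists (perm_inv g). split.
    + rewrite Ea. rewrite act_inv_l; auto.
    + intros c Hc. rewrite Ea in Hc. apply (suppP_act actA Hok) in Hc.
      specialize (Hg _ Hc). simpl. rewrite pfunK in Hg. auto.
  - destruct IHHF1 as [g [Ea Hg]]. destruct IHHF2 as [h [Eb Hh]].
    exists (perm_comp g h). split.
    + rewrite H2. congruence.
    + intros c Hc. simpl. rewrite Hg.
      * apply Hh; auto.
      * rewrite Eb. apply (suppP_act actA Hok). rewrite pinvK. auto.
Qed.

Lemma fresh_rep {A} (actA : Perm -> A -> A) : nominalP actA ->
  forall (xi : FT A actA) (n : Sb) (C : list atom), exists m' a' D',
    Fclass actA (m', a') = xi /\ agree m' n C /\ supportsP actA D' a' /\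
    (forall c, In c D' -> ~ In c C).
Proof.
  intros HA xi n C. pose proof (nominalP_ok actA HA) as Hok.
  destruct (Fclass_surj actA xi) as [[m0 a0] ->].
  destruct HA as [_ [_ HS]]. destruct (HS a0) as [D0 HD0].
  set (M := S (lmax (C ++ D0))).
  destruct (perm_ext D0 (fun c => c + M)) as [p Hp].
  { intros a b _ _ E. lia. }
  set (F := fun b => if inb b C then n b else if Nat.leb M b && inb (b - M) D0 then m0 (b - M) else b).
  assert (Hfin : forall b, ~ In b (C ++ map (fun d => d + M) D0) -> F b = b).
  { intros b Hb. unfold F. destruct (inb b C) eqn:E1.
    - apply inb_iff in E1. exfalso. apply Hb. apply in_or_app; auto.
    - destruct (Nat.leb M b && inb (b - M) D0) eqn:E2; auto.
      apply andb_prop in E2. destruct E2 as [E2 E3]. apply Nat.leb_le in E2. apply inb_iff in E3.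
      exfalso. apply Hb. apply in_or_app; right. apply in_map_iff. exists (b - M). split; auto. lia. }
  set (m' := mkSb F (ex_intro _ _ Hfin)).
  exists m', (actA p a0), (map p D0). split; [|split; [|split]].
  - apply Fclass_eq. eapply Frel_trans; [apply Frel_perm|].
    apply Frel_supp with D0; auto. intros d Hd. simpl. rewrite Hp by auto.
    unfold F. assert (d + M >= M) by lia.
    assert (inb (d + M) C = false) as ->.
    { apply inb_false. intro I. assert (d + M < M); [|lia]. apply lt_lmax. apply in_or_app; auto. }
    assert (Nat.leb M (d + M) = true) as -> by (apply Nat.leb_le; lia).
    replace (d + M - M) with d by lia.
    assert (inb d D0 = true) as -> by (apply inb_iff; auto). auto.
  - intros c Hc. simpl. unfold F. assert (inb c C = true) as -> by (apply inb_iff; auto). auto.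
  - apply supp_map; auto.
  - intros c Hc. apply in_map_iff in Hc. destruct Hc as [d [<- Hd]]. rewrite Hp by auto.
    intro I. assert (d + M < M); [|lia]. apply lt_lmax. apply in_or_app; auto.
Qed.

Lemma sepact_ok {A X} (actA : Perm -> A -> A) (actX : Perm -> X -> X) :
  pact_ok actA -> pact_ok actX -> pact_ok (sepact actA actX).
Proof.
  intros [A1 [A2 A3]] [X1 [X2 X3]]. unfold sepact. split; [|split].
  - intro f. apply functional_extensionality. intro a.
    rewrite (A3 (perm_inv perm_id) perm_id) by (intro; reflexivity). rewrite A1.
    destruct (f a); simpl; auto. rewrite X1; auto.
  - intros g h f. apply functional_extensionality. intro a.
    rewrite (A3 (perm_inv (perm_comp g h)) (perm_comp (perm_inv h) (perm_inv g))) by (intro; reflexivity).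
    rewrite A2. destruct (f _); simpl; auto. rewrite X2; auto.
  - intros g1 g2 f E. apply functional_extensionality. intro a.
    assert (Ei : forall b, pinv g1 b = pinv g2 b).
    { intro b. rewrite <- (pinvK g2 (pinv g1 b)). rewrite <- E. rewrite pfunK. auto. }
    rewrite (A3 (perm_inv g1) (perm_inv g2)) by exact Ei.
    destruct (f _); simpl; auto. rewrite (X3 g1 g2); auto.
Qed.

Lemma sepact_app {A X} (actA : Perm -> A -> A) (actX : Perm -> X -> X) :
  pact_ok actA -> forall (g : Perm) f a,
  sepact actA actX g f (actA g a) = option_map (actX g) (f a).
Proof. intros Hok g f a. unfold sepact. rewrite act_inv_l; auto. Qed.

Lemma W_core {A X} (actA : Perm -> A -> A) (actX : Perm -> X -> X) :
  nominalP actA -> nominalP actX ->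
  forall (psi : SepFun A X actA actX) (L : list atom),
  supportsP (sepact actA actX) L (proj1_sig psi) ->
  (forall c, In c L <-> suppP (sepact actA actX) (proj1_sig psi) c) ->
  forall m1 a1 m2 a2 y1 y2, Frel actA (m1, a1) (m2, a2) -> agree m1 m2 L ->
  proj1_sig psi a1 = Some y1 -> proj1_sig psi a2 = Some y2 ->
  Frel actX (m1, y1) (m2, y2).
Proof.
  intros HA HX psi L HLs HL m1 a1 m2 a2 y1 y2 HF Hag E1 E2.
  pose proof (nominalP_ok actA HA) as OA. pose proof (nominalP_ok actX HX) as OX.
  pose proof (sepact_ok actA actX OA OX) as OS.
  destruct psi as [psi [Hpsi Hdom]]. simpl in *.
  destruct (Frel_char actA OA _ _ HF) as [g [Ea Hg]]. simpl in Ea, Hg.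
  destruct (least_supp actA OA a2) as [L2 [HL2s HL2]].
  { destruct HA as [_ [_ HS]]. apply HS. }
  assert (D2 : disjP (sepact actA actX) actA psi a2) by (apply Hdom; congruence).
  assert (D1 : disjP (sepact actA actX) actA psi a1) by (apply Hdom; congruence).
  destruct (perm_ext (L ++ L2) (fun c => if inb c L then c else g c)) as [g' Hg'].
  { intros a b Ha Hb. destruct (inb a L) eqn:Ia, (inb b L) eqn:Ib; intro E; auto.
    - apply inb_iff in Ia. apply inb_false in Ib.
      assert (In b L2) by (apply in_app_or in Hb; tauto).
      exfalso. apply (D1 a); [apply HL; auto|].
      rewrite E, Ea. apply (suppP_act actA OA). rewrite pinvK. apply HL2; auto.
    - apply inb_iff in Ib. apply inb_false in Ia.
      assert (In a L2) by (apply in_app_or in Ha; tauto).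
      exfalso. apply (D1 b); [apply HL; auto|].
      rewrite <- E, Ea. apply (suppP_act actA OA). rewrite pinvK. apply HL2; auto.
    - rewrite <- (pinvK g a), <- (pinvK g b). congruence. }
  assert (Ea' : actA g' a2 = a1).
  { rewrite Ea. apply HL2s. intros c Hc. rewrite Hg' by (apply in_or_app; auto).
    destruct (inb c L) eqn:Ic; auto. apply inb_iff in Ic.
    exfalso. apply (D2 c); [apply HL; auto|apply HL2; auto]. }
  assert (Ep : sepact actA actX g' psi = psi).
  { rewrite (HLs g' perm_id). apply OS. intros c Hc. rewrite Hg' by (apply in_or_app; auto).
    apply inb_iff in Hc. rewrite Hc. auto. }
  assert (Ey : y1 = actX g' y2).
  { rewrite <- Ea', <- Ep in E1. rewrite sepact_app in E1 by auto. rewrite E2 in E1.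
    simpl in E1. congruence. }
  subst y1. eapply Frel_trans; [apply Frel_perm|].
  apply Frel_supp with (L ++ L2).
  - intros h1 h2 Hh.
    assert (S1 : sepact actA actX h1 psi = sepact actA actX h2 psi)
      by (apply HLs; intros c Hc; apply Hh; apply in_or_app; auto).
    assert (S2 : actA h1 a2 = actA h2 a2)
      by (apply HL2s; intros c Hc; apply Hh; apply in_or_app; auto).
    pose proof (sepact_app actA actX OA h1 psi a2) as T1.
    pose proof (sepact_app actA actX OA h2 psi a2) as T2.
    rewrite S1, S2, T2, E2 in T1. simpl in T1. congruence.
  - intros c Hc. simpl. rewrite Hg' by auto. destruct (inb c L) eqn:Ic.
    + apply inb_iff in Ic. apply Hag; auto.
    + apply inb_false in Ic. apply Hg. apply HL2. apply in_app_or in Hc. tauto.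
Qed.

Definition ExpP (Sig : NomPerm) {Z : Type} (actZ : Sb -> Z -> Z) (f : Sb -> FSig Sig -> Z) : Prop :=
  (forall k n a, f (sb_comp k n) (FSigAct Sig k a) = actZ k (f n a)) /\
  (exists C, supportsS (@expact (FSig Sig) Z) C f).

Definition expP {A Z : Type} (g : Perm) (f : Sb -> A -> Z) : Sb -> A -> Z := expact (pfun g) f.

Lemma expact_id {A Z} (f : Sb -> A -> Z) : expact sb_id f = f.
Proof. unfold expact. apply functional_extensionality; intro n. rewrite sb_comp_id_r. auto. Qed.
Lemma expact_comp {A Z} m n (f : Sb -> A -> Z) : expact (sb_comp m n) f = expact m (expact n f).
Proof. unfold expact. apply functional_extensionality; intro k. rewrite sb_comp_assoc. auto. Qed.

Lemma expP_ok {A Z} : pact_ok (@expP A Z).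
Proof.
  split; [|split].
  - intro f. apply expact_id.
  - intros g h f. apply expact_comp.
  - intros g1 g2 f E. unfold expP. f_equal. apply sb_eq. auto.
Qed.

Lemma ExpP_act (Sig : NomPerm) {Z} (actZ : Sb -> Z -> Z) m f :
  ExpP Sig actZ f -> ExpP Sig actZ (expact m f).
Proof.
  intros [Heq [C HC]]. split.
  - intros k n a. unfold expact. rewrite sb_comp_assoc. apply Heq.
  - exists (map m C). intros m1 m2 Hag. rewrite <- !expact_comp. apply HC.
    intros c Hc. simpl. apply Hag. apply in_map; auto.
Qed.

Lemma supportsS_P {A Z} C (f : Sb -> A -> Z) :
  supportsS (@expact A Z) C f -> supportsP (@expP A Z) C f.
Proof. intros H g1 g2 Hag. apply H. auto. Qed.

Lemma disj_act {X Y} (act1 : Perm -> X -> X) (act2 : Perm -> Y -> Y) :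
  pact_ok act1 -> pact_ok act2 -> forall g x y,
  disjP act1 act2 (act1 g x) (act2 g y) <-> disjP act1 act2 x y.
Proof.
  intros O1 O2 g x y. unfold disjP. split.
  - intros H d H1 H2. apply (H (g d)).
    + apply suppP_act; auto. rewrite pinvK. auto.
    + apply suppP_act; auto. rewrite pinvK. auto.
  - intros H c H1 H2. apply suppP_act in H1; auto. apply suppP_act in H2; auto. eauto.
Qed.

Definition psiR (Sig : NomPerm) {Z : Type} (f : Sb -> FSig Sig -> Z) (a : pCar Sig) : option Z :=
  if excluded_middle_informative (disjP (@expP (FSig Sig) Z) (pAct Sig) f a)
  then Some (f sb_id (Fclass (pAct Sig) (sb_id, a))) else None.

Lemma psiR_equiv (Sig : NomPerm) {Z} (actZ : Sb -> Z -> Z) (f : Sb -> FSig Sig -> Z) (g : Perm) :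
  ExpP Sig actZ f ->
  psiR Sig (expP g f) = sepact (pAct Sig) (Uact actZ) g (psiR Sig f).
Proof.
  intros [Heq _]. pose proof (nominalP_ok _ (pNom Sig)) as OS.
  apply functional_extensionality. intro a. unfold sepact, psiR.
  assert (Eb : a = pAct Sig g (pAct Sig (perm_inv g) a)) by (rewrite act_inv_r; auto).
  destruct (excluded_middle_informative (disjP expP (pAct Sig) (expP g f) a)) as [d1|d1];
  destruct (excluded_middle_informative (disjP expP (pAct Sig) f (pAct Sig (perm_inv g) a))) as [d2|d2]; simpl.
  - f_equal. unfold expP, expact, Uact. rewrite <- Heq. rewrite sb_comp_id_r, sb_comp_id_l.
    f_equal. unfold FSigAct. rewrite Fact_class. simpl. rewrite sb_comp_id_r.
    apply Fclass_eq. rewrite Eb at 1. eapply Frel_trans; [apply Frel_perm|]. rewrite sb_comp_id_l. apply Frel_refl.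
  - exfalso. apply d2. apply (disj_act _ _ expP_ok OS g). rewrite <- Eb. auto.
  - exfalso. apply d1. rewrite Eb. apply (disj_act _ _ expP_ok OS g). auto.
  - auto.
Qed.

Lemma Exp_eval (Sig : NomPerm) {Z} (actZ : Sb -> Z -> Z) (f : Sb -> FSig Sig -> Z) C :
  ExpP Sig actZ f -> supportsS (@expact (FSig Sig) Z) C f ->
  forall (n m' : Sb) (a' : pCar Sig), agree m' n C ->
  f n (Fclass (pAct Sig) (m', a')) = actZ m' (f sb_id (Fclass (pAct Sig) (sb_id, a'))).
Proof.
  intros [Heq _] HC n m' a' Hag.
  assert (E1 : f n (Fclass (pAct Sig) (m', a')) = f m' (Fclass (pAct Sig) (m', a'))).
  { assert (E := HC n m' (fun c Hc => eq_sym (Hag c Hc))).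
    apply (f_equal (fun h => h sb_id (Fclass (pAct Sig) (m', a')))) in E.
    unfold expact in E. rewrite !sb_comp_id_l in E. auto. }
  rewrite E1. rewrite <- Heq. rewrite sb_comp_id_r. unfold FSigAct. rewrite Fact_class.
  simpl. rewrite sb_comp_id_r. auto.
Qed.

Lemma psiR_inj (Sig : NomPerm) {Z} (actZ : Sb -> Z -> Z) (f1 f2 : Sb -> FSig Sig -> Z) :
  ExpP Sig actZ f1 -> ExpP Sig actZ f2 -> psiR Sig f1 = psiR Sig f2 -> f1 = f2.
Proof.
  intros H1 H2 E. pose proof H1 as [_ [C1 HC1]]. pose proof H2 as [_ [C2 HC2]].
  apply functional_extensionality; intro n. apply functional_extensionality; intro xi.
  destruct (fresh_rep (pAct Sig) (pNom Sig) xi n (C1 ++ C2)) as [m' [a' [D' [Exi [Hag [HD' HDC]]]]]].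
  subst xi.
  rewrite (Exp_eval Sig actZ f1 C1 H1 HC1 n m' a') by (intros c Hc; apply Hag; apply in_or_app; auto).
  rewrite (Exp_eval Sig actZ f2 C2 H2 HC2 n m' a') by (intros c Hc; apply Hag; apply in_or_app; auto).
  f_equal. apply (f_equal (fun h => h a')) in E. unfold psiR in E.
  assert (Hd : forall (f : Sb -> FSig Sig -> Z) C, supportsS expact C f ->
     (forall c, In c C -> In c (C1 ++ C2)) -> disjP expP (pAct Sig) f a').
  { intros f C HC HCC c S1 S2. apply (HDC c).
    - apply S2. auto.
    - apply HCC. apply S1. apply supportsS_P; auto. }
  destruct (excluded_middle_informative (disjP expP (pAct Sig) f1 a')) as [d1|d1];
  destruct (excluded_middle_informative (disjP expP (pAct Sig) f2 a')) as [d2|d2].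
  - congruence.
  - exfalso; apply d2; apply (Hd f2 C2); auto. intros c Hc; apply in_or_app; auto.
  - exfalso; apply d1; apply (Hd f1 C1); auto. intros c Hc; apply in_or_app; auto.
  - exfalso; apply d1; apply (Hd f1 C1); auto. intros c Hc; apply in_or_app; auto.
Qed.

Lemma psiR_supp (Sig : NomPerm) {Z} (actZ : Sb -> Z -> Z) (f : Sb -> FSig Sig -> Z) :
  ExpP Sig actZ f -> forall C,
  supportsP (sepact (pAct Sig) (Uact actZ)) C (psiR Sig f) <-> supportsP expP C f.
Proof.
  intros Hf C. split.
  - intros H g1 g2 Hag. apply (psiR_inj Sig actZ); try apply ExpP_act; auto.
    rewrite !(psiR_equiv Sig actZ) by auto. apply H; auto.
  - intros H g1 g2 Hag. rewrite <- !(psiR_equiv Sig actZ) by auto. f_equal. apply H; auto.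
Qed.

Lemma suppP_transfer {X Y} (a1 : Perm -> X -> X) (a2 : Perm -> Y -> Y) x y :
  (forall C, supportsP a1 C x <-> supportsP a2 C y) -> forall c, suppP a1 x c <-> suppP a2 y c.
Proof. intros H c. unfold suppP. split; intros H' C HC; apply H'; apply H; auto. Qed.

Lemma psiR_sep (Sig : NomPerm) {Z} (actZ : Sb -> Z -> Z) (f : Sb -> FSig Sig -> Z) :
  ExpP Sig actZ f ->
  (exists C, supportsP (sepact (pAct Sig) (Uact actZ)) C (psiR Sig f)) /\
  (forall a, psiR Sig f a <> None <->
     disjP (sepact (pAct Sig) (Uact actZ)) (pAct Sig) (psiR Sig f) a).
Proof.
  intros Hf. pose proof Hf as [_ [C HC]]. split.
  - exists C. apply psiR_supp; auto. apply supportsS_P; auto.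
  - intro a. pose proof (suppP_transfer _ _ _ _ (psiR_supp Sig actZ f Hf)) as T.
    unfold psiR at 1. destruct (excluded_middle_informative _) as [d|d].
    + split; [intros _|congruence]. intros c S1 S2. apply (d c); auto. apply T; auto.
    + split; [congruence|]. intro D. exfalso. apply d. intros c S1 S2. apply (D c); auto.
      apply T; auto.
Qed.

Definition psiS (Sig : NomPerm) {Z} (actZ : Sb -> Z -> Z)
  (F : Exp (FSig Sig) Z (FSigAct Sig) actZ) : SepFun (pCar Sig) Z (pAct Sig) (Uact actZ) :=
  exist _ (psiR Sig (proj1_sig F)) (psiR_sep Sig actZ (proj1_sig F) (proj2_sig F)).

Lemma psiR_some (Sig : NomPerm) {Z} (f : Sb -> FSig Sig -> Z) a z :
  psiR Sig f a = Some z -> z = f sb_id (Fclass (pAct Sig) (sb_id, a)).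
Proof. unfold psiR. destruct (excluded_middle_informative _); congruence. Qed.

Lemma psiR_def (Sig : NomPerm) {Z} (f : Sb -> FSig Sig -> Z) a :
  disjP expP (pAct Sig) f a -> psiR Sig f a = Some (f sb_id (Fclass (pAct Sig) (sb_id, a))).
Proof. unfold psiR. destruct (excluded_middle_informative _); tauto. Qed.

Lemma LS_ex (Sig Y : NomPerm) (psi : SepFun (pCar Sig) (pCar Y) (pAct Sig) (pAct Y)) :
  exists L, supportsP (sepact (pAct Sig) (pAct Y)) L (proj1_sig psi) /\
    forall c, In c L <-> suppP (sepact (pAct Sig) (pAct Y)) (proj1_sig psi) c.
Proof.
  apply least_supp.
  - apply sepact_ok; apply nominalP_ok; apply pNom.
  - apply (proj1 (proj2_sig psi)).
Qed.

Definition LS (Sig Y : NomPerm) (psi : SepFun (pCar Sig) (pCar Y) (pAct Sig) (pAct Y)) : list atom :=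
  proj1_sig (constructive_indefinite_description _ (LS_ex Sig Y psi)).

Lemma LS_spec (Sig Y : NomPerm) psi :
  supportsP (sepact (pAct Sig) (pAct Y)) (LS Sig Y psi) (proj1_sig psi) /\
  forall c, In c (LS Sig Y psi) <-> suppP (sepact (pAct Sig) (pAct Y)) (proj1_sig psi) c.
Proof. unfold LS. destruct (constructive_indefinite_description _ _); simpl; auto. Qed.

Lemma Fy_ex (Sig Y : NomPerm) (psi : SepFun (pCar Sig) (pCar Y) (pAct Sig) (pAct Y))
  (n : Sb) (xi : FSig Sig) :
  exists t : Sb * pCar Sig * pCar Y,
    Fclass (pAct Sig) (fst (fst t), snd (fst t)) = xi /\ agree (fst (fst t)) n (LS Sig Y psi) /\
    proj1_sig psi (snd (fst t)) = Some (snd t).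
Proof.
  destruct (fresh_rep (pAct Sig) (pNom Sig) xi n (LS Sig Y psi)) as [m' [a' [D' [E1 [E2 [E3 E4]]]]]].
  destruct (LS_spec Sig Y psi) as [_ HL].
  destruct (proj1_sig psi a') as [y'|] eqn:Ea.
  - exists (m', a', y'). simpl. auto.
  - exfalso. apply (proj2 (proj2_sig psi) a'); [|exact Ea].
    intros c S1 S2. apply (E4 c).
    + apply S2. auto.
    + apply HL. auto.
Qed.

Definition FyP (Sig Y : NomPerm) (psi : SepFun (pCar Sig) (pCar Y) (pAct Sig) (pAct Y))
  (n : Sb) (xi : FSig Sig) : FT (pCar Y) (pAct Y) :=
  let t := proj1_sig (constructive_indefinite_description _ (Fy_ex Sig Y psi n xi)) in
  Fclass (pAct Y) (fst (fst t), snd t).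

Lemma FyP_choice (Sig Y : NomPerm) psi (n : Sb) xi :
  exists m' a' y', Fclass (pAct Sig) (m', a') = xi /\ agree m' n (LS Sig Y psi) /\
    proj1_sig psi a' = Some y' /\ FyP Sig Y psi n xi = Fclass (pAct Y) (m', y').
Proof.
  unfold FyP. destruct (constructive_indefinite_description _ _) as [[[m' a'] y'] [E1 [E2 E3]]].
  simpl in *. exists m', a', y'. auto.
Qed.

Lemma FyP_spec (Sig Y : NomPerm) psi (n : Sb) xi (m' : Sb) a' y' :
  Fclass (pAct Sig) (m', a') = xi -> agree m' n (LS Sig Y psi) -> proj1_sig psi a' = Some y' ->
  FyP Sig Y psi n xi = Fclass (pAct Y) (m', y').
Proof.
  intros E1 E2 E3.
  destruct (FyP_choice Sig Y psi n xi) as [m1 [a1 [y1 [F1 [F2 [F3 F4]]]]]].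
  rewrite F4. apply Fclass_eq. destruct (LS_spec Sig Y psi) as [HLs HL].
  apply (W_core (pAct Sig) (pAct Y) (pNom Sig) (pNom Y) psi (LS Sig Y psi) HLs HL m1 a1 m' a'); auto.
  - apply Fclass_inv. congruence.
  - intros c Hc. rewrite F2, E2; auto.
Qed.

Lemma FyP_supp (Sig Y : NomPerm) psi : supportsS expact (LS Sig Y psi) (FyP Sig Y psi).
Proof.
  intros m1 m2 Hag. apply functional_extensionality; intro n.
  apply functional_extensionality; intro xi. unfold expact.
  destruct (FyP_choice Sig Y psi (sb_comp n m1) xi) as [k1 [a1 [y1 [F1 [F2 [F3 F4]]]]]].
  rewrite F4. symmetry. apply (FyP_spec Sig Y psi _ _ _ a1); auto.
  intros c Hc. rewrite F2 by auto. simpl. rewrite Hag; auto.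
Qed.

Lemma FyP_ExpP (Sig Y : NomPerm) psi : ExpP Sig (Fact (pAct Y)) (FyP Sig Y psi).
Proof.
  split.
  - intros k n xi. destruct (FyP_choice Sig Y psi n xi) as [m1 [a1 [y1 [F1 [F2 [F3 F4]]]]]].
    rewrite F4, Fact_class. simpl. apply (FyP_spec Sig Y psi _ _ _ a1); auto.
    + rewrite <- F1. unfold FSigAct. rewrite Fact_class. auto.
    + intros c Hc. simpl. rewrite F2; auto.
  - exists (LS Sig Y psi). apply FyP_supp.
Qed.

Lemma FyP_equiv (Sig Y : NomPerm) psi psi' (g : Perm) :
  proj1_sig psi' = sepact (pAct Sig) (pAct Y) g (proj1_sig psi) ->
  FyP Sig Y psi' = expact g (FyP Sig Y psi).
Proof.
  intros Ep. pose proof (nominalP_ok _ (pNom Sig)) as OS. pose proof (nominalP_ok _ (pNom Y)) as OY.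
  pose proof (sepact_ok _ _ OS OY) as OSep.
  apply functional_extensionality; intro n. apply functional_extensionality; intro xi.
  destruct (FyP_choice Sig Y psi' n xi) as [m1 [a1 [y1 [F1 [F2 [F3 F4]]]]]].
  rewrite F4. rewrite Ep in F3. unfold sepact in F3.
  match type of F3 with option_map _ ?t = _ => destruct t as [y0|] eqn:E0 end; [|discriminate F3].
  simpl in F3. apply (f_equal (fun o => match o with Some v => v | None => y0 end)) in F3. simpl in F3. subst y1. unfold expact. symmetry.
  transitivity (Fclass (pAct Y) (sb_comp m1 g, y0)).
  - apply (FyP_spec Sig Y psi _ _ _ (pAct Sig (perm_inv g) a1)); auto.
    + rewrite <- F1. apply Fclass_eq. apply Frel_sym.
      rewrite <- (act_inv_r _ OS g a1) at 1. apply Frel_perm.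
    + intros c Hc. simpl. apply F2.
      destruct (LS_spec Sig Y psi) as [_ HL]. destruct (LS_spec Sig Y psi') as [_ HL'].
      apply HL'. rewrite Ep. apply suppP_act; auto. rewrite pinvK. apply HL. auto.
  - apply Fclass_eq. apply Frel_sym. apply Frel_perm.
Qed.

Definition FYn (Y : NomPerm) : NomSb :=
  Build_NomSb (FT (pCar Y) (pAct Y)) (Fact (pAct Y)) (F_nominal _ (pNom Y)).

Definition ExpActG (Sig : NomPerm) {Z} (actZ : Sb -> Z -> Z) (m : Sb)
  (e : Exp (FSig Sig) Z (FSigAct Sig) actZ) : Exp (FSig Sig) Z (FSigAct Sig) actZ :=
  exist _ (expact m (proj1_sig e)) (ExpP_act Sig actZ m _ (proj2_sig e)).

Definition FyE (Sig Y : NomPerm) psi : Exp (FSig Sig) (FT (pCar Y) (pAct Y)) (FSigAct Sig) (Fact (pAct Y)) :=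
  exist _ (FyP Sig Y psi) (FyP_ExpP Sig Y psi).

Definition deltaF (Sig : NomPerm) (O : NomSb) (Y : NomPerm) (delta : pCar Y -> Sobj Sig O (pAct Y))
  (xi : sCar (FYn Y)) : Bobj Sig O (sAct (FYn Y)) :=
  (sAct O (fst (Frep xi)) (fst (delta (snd (Frep xi)))),
   ExpActG Sig (Fact (pAct Y)) (fst (Frep xi)) (FyE Sig Y (snd (delta (snd (Frep xi)))))).

Lemma deltaF_class (Sig : NomPerm) (O : NomSb) (Y : NomPerm) delta :
  S_equiv Sig O delta -> forall m y,
  fst (deltaF Sig O Y delta (Fclass (pAct Y) (m, y))) = sAct O m (fst (delta y)) /\
  proj1_sig (snd (deltaF Sig O Y delta (Fclass (pAct Y) (m, y)))) = expact m (FyP Sig Y (snd (delta y))).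
Proof.
  intros Hd m y. pose proof (Fclass_inv _ _ _ (Frep_spec (pAct Y) (Fclass (pAct Y) (m, y)))) as HF.
  destruct (sNom O) as [O1 [O2 O3]].
  split; simpl.
  - apply (ext_wd (pAct Y) (sAct O) (fun y => fst (delta y)) O1 O2) with (q := (m, y)); auto.
    intros g a. apply Hd.
  - apply (ext_wd (pAct Y) expact (fun y => FyP Sig Y (snd (delta y)))) with (q := (m, y)); auto.
    + apply expact_id.
    + apply expact_comp.
    + intro a. apply (proj2 (FyP_ExpP Sig Y _)).
    + intros g a. apply FyP_equiv. apply Hd.
Qed.

Lemma deltaF_equiv (Sig : NomPerm) (O : NomSb) (Y : NomPerm) delta :
  S_equiv Sig O delta -> B_equiv Sig O (deltaF Sig O Y delta).
Proof.
  intros Hd m xi. destruct (Fclass_surj _ xi) as [[k y] ->].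
  change (sAct (FYn Y) m) with (Fact (pAct Y) m). rewrite Fact_class. cbn [fst snd].
  destruct (deltaF_class Sig O Y delta Hd (sb_comp m k) y) as [A1 A2].
  destruct (deltaF_class Sig O Y delta Hd k y) as [B1 B2].
  rewrite A1, A2, B1, B2. split.
  - apply (proj1 (proj2 (sNom O))).
  - apply expact_comp.
Qed.

Theorem mainTheorem11 (Sig : NomPerm) (O : NomSb)
  (zeta : Carrier Sig O -> Bobj Sig O (CarrierAct Sig O))
  (Hfin : final_B Sig O zeta) :
  exists gam : Carrier Sig O -> Sobj Sig O (Uact (CarrierAct Sig O)),
    (forall e, fst (gam e) = fst (zeta e) /\
       forall s xi, phi_rel Sig (snd (gam e)) s xi (proj1_sig (snd (zeta e)) s xi)) /\
    final_S Sig O gam.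
Proof.
  destruct Hfin as [Hnom [Hzeq Huniv]].
  pose proof Hnom as [N1 [N2 N3]].
  set (CA := CarrierAct Sig O) in *.
  exists (fun e => (fst (zeta e), psiS Sig CA (snd (zeta e)))). split.
  { intro e. split; [reflexivity|]. intros s xi. simpl.
    set (f := proj1_sig (snd (zeta e))).
    assert (Hf : ExpP Sig CA f) by exact (proj2_sig (snd (zeta e))).
    pose proof Hf as [_ [C HC]].
    destruct (fresh_rep (pAct Sig) (pNom Sig) xi s C) as [m' [a' [D' [E1 [E2 [E3 E4]]]]]].
    exists m', (psiS Sig CA (snd (zeta e))), a', (f sb_id (Fclass (pAct Sig) (sb_id, a'))).
    split; [|split; [|split]].
    - simpl. apply psiR_def. intros c S1 S2. apply (E4 c); [apply S2; auto|apply S1; apply supportsS_P; auto].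
    - simpl. apply Frel_supp with C; auto. apply (psiR_supp Sig CA); auto. apply supportsS_P; auto.
    - auto.
    - rewrite <- E1. apply (Exp_eval Sig CA f C Hf HC s m' a' E2). }
  split; [|split].
  { split; [|split].
    - intro x. apply N1.
    - intros g h x. apply N2.
    - intro x. destruct (N3 x) as [C HC]. exists C. intros g1 g2 Hag. apply HC. auto. }
  { intros g e. simpl. destruct (Hzeq g e) as [Z1 Z2]. split; [exact Z1|]. unfold Uact at 1.
    rewrite Z2. apply (psiR_equiv Sig CA). exact (proj2_sig (snd (zeta e))). }
  intros Y delta Hd.
  destruct (Huniv (FYn Y) (deltaF Sig O Y delta) (deltaF_equiv Sig O Y delta Hd)) as [hB [[HhB1 HhB2] HhBu]].
  exists (fun y => hB (Fclass (pAct Y) (sb_id, y))). split.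
  { split.
    - intros g y. unfold Uact. rewrite <- HhB1. f_equal.
      change (sAct (FYn Y) g) with (Fact (pAct Y) g). rewrite Fact_class. simpl.
      apply Fclass_eq. eapply Frel_trans; [apply Frel_perm|].
      rewrite sb_comp_id_l, sb_comp_id_r. apply Frel_refl.
    - intro y. destruct (HhB2 (Fclass (pAct Y) (sb_id, y))) as [H1 H2].
      destruct (deltaF_class Sig O Y delta Hd sb_id y) as [K1 K2].
      split.
      + simpl. rewrite H1, K1. apply (proj1 (sNom O)).
      + intros a x Ha. simpl.
        set (psi := snd (delta y)) in *.
        set (f := proj1_sig (snd (zeta (hB (Fclass (pAct Y) (sb_id, y)))))).
        assert (Hfeq : forall n xi, f n xi = hB (FyP Sig Y psi n xi)).
        { intros n xi. unfold f. rewrite H2, K2. unfold expact. rewrite sb_comp_id_r. auto. }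
        destruct (LS_spec Sig Y psi) as [HLs HL].
        assert (Hsf : supportsP expP (LS Sig Y psi) f).
        { intros g1 g2 Hag. apply functional_extensionality; intro n.
          apply functional_extensionality; intro xi. unfold expP, expact. rewrite !Hfeq.
          f_equal. pose proof (FyP_supp Sig Y psi g1 g2 Hag) as E.
          apply (f_equal (fun F => F n xi)) in E. exact E. }
        rewrite psiR_def.
        * f_equal. rewrite Hfeq. f_equal. apply (FyP_spec Sig Y psi _ _ _ a); auto.
          intros c _; auto.
        * intros c S1 S2. assert (Hdj : disjP (sepact (pAct Sig) (pAct Y)) (pAct Sig) (proj1_sig psi) a)
            by (apply (proj2 (proj2_sig psi)); congruence).
          apply (Hdj c); auto. apply HL. apply S1. auto. }
  intros h' [Hh'1 Hh'2] y.
  assert (Hequiv : forall (g : Perm) a, h' (pAct Y g a) = CA g (h' a)) by (intros; apply Hh'1).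
  set (hB' := extF (pAct Y) CA h').
  assert (HB'c : forall p, hB' (Fclass (pAct Y) p) = CA (fst p) (h' (snd p))).
  { intro p. apply extF_class; auto. }
  assert (Hhom : B_hom Sig O (deltaF Sig O Y delta) zeta hB').
  { split.
    - intros m xi. destruct (Fclass_surj _ xi) as [[k y0] ->].
      change (sAct (FYn Y) m) with (Fact (pAct Y) m). rewrite Fact_class, !HB'c. simpl. apply N2.
    - intros xi. destruct (Fclass_surj _ xi) as [[m y0] ->].
      destruct (deltaF_class Sig O Y delta Hd m y0) as [K1 K2].
      rewrite HB'c. cbn [fst snd]. destruct (Hzeq m (h' y0)) as [Z1 Z2]. split.
      + rewrite Z1, K1. f_equal. apply (proj1 (Hh'2 y0)).
      + intros n xi'. rewrite Z2, K2. unfold expact.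
        set (s := sb_comp n m). clearbody s. clear n.
        set (psi := snd (delta y0)).
        set (f' := proj1_sig (snd (zeta (h' y0)))).
        assert (Hf' : ExpP Sig CA f') by exact (proj2_sig (snd (zeta (h' y0)))).
        pose proof Hf' as [_ [C' HC']].
        destruct (LS_spec Sig Y psi) as [HLs HL].
        destruct (fresh_rep (pAct Sig) (pNom Sig) xi' s (LS Sig Y psi ++ C'))
          as [m1 [a1 [D' [E1 [E2 [E3 E4]]]]]].
        destruct (proj1_sig psi a1) as [y1|] eqn:Ea.
        2:{ exfalso. apply (proj2 (proj2_sig psi) a1); [|exact Ea].
            intros c S1 S2. apply (E4 c); [apply S2; auto|]. apply in_or_app; left. apply HL; auto. }
        rewrite (FyP_spec Sig Y psi s xi' m1 a1 y1 E1); auto.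
        2:{ intros c Hc. apply E2. apply in_or_app; auto. }
        rewrite HB'c. simpl.
        pose proof (proj2 (Hh'2 y0) a1 y1 Ea) as Hs. simpl in Hs.
        apply psiR_some in Hs. rewrite Hs. rewrite <- E1.
        apply (Exp_eval Sig CA f' C' Hf' HC' s m1 a1).
        intros c Hc. apply E2. apply in_or_app; auto. }
  pose proof (HhBu hB' Hhom (Fclass (pAct Y) (sb_id, y))) as E.
  rewrite HB'c in E. simpl in E. rewrite N1 in E. exact E.
Qed.
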